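(* Let $\mathbb{K}=(G,M,I)$ be a formal context and let ${\downarrow}\operatorname{Ext}(\mathbb{K})$ be the lattice of all closure systems on $G$ contained in $\operatorname{Ext}(\mathbb{K})$, ordered by inclusion. Then ${\downarrow}\operatorname{Ext}(\mathbb{K})$ (i) is join-semidistributive, (ii) is lower semi-modular, (iii) is meet-distributive, (iv) is join-pseudocomplemented, (v) is ranked, and (vi) is atomistic.
   Context: A formal context is a triple $(G,M,I)$ with finite nonempty sets $G$, $M$ and $I\subseteq G\times M$; derivations $A'=\{m\mid\forall a\in A:(a,m)\in I\}$, $B'=\{g\mid\forall b\in B:(g,b)\in I\}$; $\operatorname{Ext}(\mathbb{K})=\{A\subseteq G\mid A''=A\}$. A closure system on $G$ is a family of subsets of $G$ containing $G$ and closed under intersections; in ${\downarrow}\operatorname{Ext}(\mathbb{K})$ meet is intersection and join is the generated closure system. For a lattice $(L,\le)$ with cover relation $\prec$: $L$ is lower semi-modular iff for all $x,y$: $x\prec x\vee y$ implies $x\wedge y\prec y$; join-semidistributive iff $x\vee y=x\vee z$ implies $x\vee y=x\vee(y\wedge z)$; meet-distributive iff it is join-semidistributive and lower semi-modular; join-pseudocomplemented iff for every $x$ the set $\{y\in L\mid y\vee x=\top\}$ has a least element; ranked iff there is $\rho:L\to\mathbb{N}$ with $x\prec y\Rightarrow\rho(x)+1=\rho(y)$; atomistic iff every element is a join of atoms. *)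

(* Defs.v *)
From mathcomp Require Import all_boot.
Set Implicit Arguments. Unset Strict Implicit. Unset Printing Implicit Defensive.

Section FCA.
Variables (G M : finType) (I : {set G * M}).

Definition intent (A : {set G}) : {set M} :=
  [set m | [forall g in A, (g, m) \in I]].
Definition extent (B : {set M}) : {set G} :=
  [set g | [forall m in B, (g, m) \in I]].

Definition Ext : {set {set G}} := [set A | extent (intent A) == A].

End FCA.

(* closure system on G: contains G and closed under (arbitrary, here finite)
   intersections of subfamilies; the empty subfamily gives G itself. *)
Definition closure_system (G : finType) (C : {set {set G}}) : bool :=
  [forall S : {set {set G}}, (S \subset C) ==> ((\bigcap_(A in S) A) \in C)].

Definition gen_cs (G : finType) (F : {set {set G}}) : {set {set G}} :=
  [set (\bigcap_(A in S) A) | S : {set {set G}} in powerset F].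

Definition downExt (G M : finType) (I : {set G * M}) : {set {set {set G}}} :=
  [set C | closure_system C && (C \subset Ext I)].

Definition cs_meet (G : finType) (C D : {set {set G}}) := C :&: D.
Definition cs_join (G : finType) (C D : {set {set G}}) := gen_cs (C :|: D).

Section LatticeNotions.
Variables (T : finType) (L : {set T}) (le : rel T) (join meet : T -> T -> T)
          (top bot : T).

Definition lt_ x y := le x y && (x != y).

Definition covers (x y : T) : Prop :=
  [/\ x \in L, y \in L, lt_ x y & forall z, z \in L -> ~ (lt_ x z /\ lt_ z y)].

Definition lower_semimodular : Prop :=
  forall x y, x \in L -> y \in L -> covers x (join x y) -> covers (meet x y) y.

Definition join_semidistributive : Prop :=
  forall x y z, x \in L -> y \in L -> z \in L ->
    join x y = join x z -> join x y = join x (meet y z).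

Definition meet_distributive : Prop :=
  join_semidistributive /\ lower_semimodular.

Definition join_pseudocomplemented : Prop :=
  forall x, x \in L ->
    exists2 y, (y \in L /\ join y x = top) &
      forall z, z \in L -> join z x = top -> le y z.

Definition ranked : Prop :=
  exists rho : T -> nat, forall x y, covers x y -> rho x + 1 = rho y.

Definition atom (a : T) : Prop := covers bot a.

Definition atomistic : Prop :=
  forall x, x \in L -> exists S : {set T},
    (forall a, a \in S -> atom a) /\ x = \big[join/bot]_(a in S) a.

End LatticeNotions.

(* Main.v *)
Require Import Defs.
From mathcomp Require Import all_boot zify.
Set Implicit Arguments. Unset Strict Implicit. Unset Printing Implicit Defensive.

Section Gen.
Variable G : finType.
Implicit Types (F C W S T : {set {set G}}) (A B : {set G}).

Lemma csP C : reflect (forall S, S \subset C -> \bigcap_(A in S) A \in C) (closure_system C).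
Proof.
apply: (iffP forallP) => H S; [move=> hS; exact: (implyP (H S) hS) | apply/implyP; exact: H].
Qed.

Lemma genP F A : reflect (exists2 S : {set {set G}}, S \subset F & A = \bigcap_(B in S) B) (A \in gen_cs F).
Proof.
apply: (iffP imsetP) => [[S]|[S]]; [rewrite powersetE => hS ->| move=> hS ->]; exists S => //.
by rewrite powersetE.
Qed.

Definition cl F A := \bigcap_(B in [set B in F | A \subset B]) B.

Lemma gen_cl F A : (A \in gen_cs F) = (cl F A \subset A).
Proof.
apply/idP/idP.
  case/genP => S hS ->; apply/bigcapsP => B hB; apply: bigcap_inf.
  by rewrite inE (subsetP hS) // bigcap_inf.
move=> h; apply/genP; exists [set B in F | A \subset B].
  by apply/subsetP => B; rewrite inE => /andP[].
apply/eqP; rewrite eqEsubset h andbT; apply/bigcapsP => B; rewrite inE => /andP[].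
by [].
Qed.

Lemma gen_closed F : closure_system (gen_cs F).
Proof.
apply/csP => T hT; rewrite gen_cl; apply/bigcapsP => E hE.
have := subsetP hT E hE; rewrite gen_cl => hE'.
apply: subset_trans hE'; apply/bigcapsP => B; rewrite inE => /andP[BF EB].
apply: bigcap_inf; rewrite inE BF (subset_trans _ EB) //; exact: bigcap_inf.
Qed.

Lemma sub_gen F : F \subset gen_cs F.
Proof. by apply/subsetP => A hA; rewrite gen_cl; apply: bigcap_inf; rewrite inE hA subxx. Qed.

Lemma gen_mono F1 F2 : F1 \subset F2 -> gen_cs F1 \subset gen_cs F2.
Proof.
move=> h12; apply/subsetP => A; rewrite !gen_cl => h; apply: subset_trans h.
apply/bigcapsP => B; rewrite inE => /andP[B1 AB]; apply: bigcap_inf.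
by rewrite inE (subsetP h12).
Qed.

Lemma gen_sub_cs C : closure_system C -> gen_cs C \subset C.
Proof. by move=> hC; apply/subsetP => A /genP [S hS ->]; exact: (csP _ hC S hS). Qed.

Lemma gen_least F C : closure_system C -> F \subset C -> gen_cs F \subset C.
Proof. by move=> hC hF; apply: subset_trans (gen_mono hF) (gen_sub_cs hC). Qed.

Lemma gen_id C : closure_system C -> gen_cs C = C.
Proof. by move=> hC; apply/eqP; rewrite eqEsubset gen_sub_cs // sub_gen. Qed.

Lemma gen_irr F A : A \in gen_cs F -> A \notin F ->
  \bigcap_(B in [set B in F | A \proper B]) B \subset A.
Proof.
rewrite gen_cl => h nA; apply: subset_trans h.
apply/bigcapsP => B; rewrite inE => /andP[BF AB]; apply: bigcap_inf.
rewrite inE BF properEneq AB andbT; apply/eqP => eAB; subst; by rewrite BF in nA.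
Qed.

Lemma cs_bigcap W T : closure_system W -> T \subset W -> \bigcap_(A in T) A \in W.
Proof. by move/csP; apply. Qed.

Lemma gen_step F W A : A \in gen_cs F -> A \notin F -> closure_system W ->
  (forall B, B \in F -> A \proper B -> B \in W) -> A \in W.
Proof.
move=> hA nA hW H.
have -> : A = \bigcap_(B in [set B in F | A \proper B]) B.
  apply/eqP; rewrite eqEsubset gen_irr // andbT.
  by apply/bigcapsP => B; rewrite inE => /andP[_ /proper_sub].
apply: cs_bigcap => //; apply/subsetP => B; rewrite inE => /andP[]; exact: H.
Qed.

Lemma down_ind (P : {set G} -> Prop) :
  (forall A, (forall B, A \proper B -> P B) -> P A) -> forall A, P A.
Proof.
move=> H A; move: {2}(#|G| - #|A|) (leqnn (#|G| - #|A|)) => n.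
elim: n A => [|n IH] A hA; apply: H => B hB; have := proper_card hB; have := max_card B.
  lia.
move=> h1 h2; apply: IH; lia.
Qed.

Lemma gen_U_gen F U : gen_cs (F :|: gen_cs U) = gen_cs (F :|: U).
Proof.
apply/eqP; rewrite eqEsubset; apply/andP; split.
  apply: gen_least; first exact: gen_closed.
  rewrite subUset; apply/andP; split.
    apply: subset_trans (sub_gen _); exact: subsetUl.
  apply: gen_mono; exact: subsetUr.
apply: gen_mono; apply: setUS; exact: sub_gen.
Qed.

Lemma cs_setI C D : closure_system C -> closure_system D -> closure_system (C :&: D).
Proof.
move=> /csP hC /csP hD; apply/csP => S; rewrite subsetI => /andP[h1 h2].
by rewrite inE hC ?hD.
Qed.

End Gen.
Section ExtS.
Variables (G M : finType) (I : {set G * M}).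
Implicit Types (F C W S T x y z : {set {set G}}) (A B : {set G}).

Lemma sub_ext A : A \subset extent I (intent I A).
Proof.
apply/subsetP => g gA; rewrite inE; apply/forall_inP => m; rewrite inE.
by move/forall_inP; apply.
Qed.

Lemma Ext_cs : closure_system (Ext I).
Proof.
apply/csP => S hS; rewrite inE eqEsubset sub_ext andbT.
apply/bigcapsP => A hA.
have := subsetP hS A hA; rewrite inE => /eqP <-.
apply/subsetP => g; rewrite !inE => /forall_inP h; apply/forall_inP => m.
rewrite inE => /forall_inP hm; apply: h; rewrite inE; apply/forall_inP => g' g'D.
apply: hm; exact: (subsetP (bigcap_inf A hA)).
Qed.

Local Notation L := (downExt I).
Local Notation le := (fun C D : {set {set G}} => C \subset D).

Lemma inL C : (C \in L) = closure_system C && (C \subset Ext I).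
Proof. by rewrite inE. Qed.

Lemma join_L x y : x \in L -> y \in L -> cs_join x y \in L.
Proof.
rewrite !inL => /andP[_ xE] /andP[_ yE].
by rewrite gen_closed gen_least ?Ext_cs // subUset xE yE.
Qed.

Lemma meet_L x y : x \in L -> y \in L -> cs_meet x y \in L.
Proof.
rewrite !inL => /andP[cx xE] /andP[cy yE].
by rewrite cs_setI // (subset_trans _ xE) // subsetIl.
Qed.

Lemma cover_card x y : covers L le x y -> #|y| = #|x| + 1.
Proof.
case=> xL yL /= /andP[xy nxy] H.
have: exists A, A \in y :\: x.
  have : x \proper y by rewrite properEneq nxy xy.
  by case/properP => _ [A Ay Ax]; exists A; rewrite inE Ax Ay.
case=> A0 hA0.
case: (arg_minnP (fun A => #|A|) hA0) => A /setDP [Ay Ax] Amin.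
set z := A |: x.
have zy : z \subset y by rewrite subUset sub1set Ay xy.
move: (yL); rewrite inL => /andP[cy yE].
move: (xL); rewrite inL => /andP[cx xE].
have zL : z \in L.
  rewrite inL (subset_trans zy yE) andbT; apply/csP => S Sz.
  case: (boolP (A \in S)) => AS.
    have Dy : \bigcap_(B in S) B \in y := cs_bigcap cy (subset_trans Sz zy).
    have DA : \bigcap_(B in S) B \subset A by exact: bigcap_inf.
    case: (eqVneq (\bigcap_(B in S) B) A) => [->|neA]; first by rewrite setU11.
    have Dx : \bigcap_(B in S) B \in x.
      apply: contraT => nDx.
      have h0 : \bigcap_(B in S) B \in y :\: x -> #|A| <= #|\bigcap_(B in S) B| := Amin _. have h : #|A| <= #|\bigcap_(B in S) B| by apply: h0; rewrite inE nDx Dy.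
      have p : \bigcap_(B in S) B \proper A by rewrite properEneq neA DA.
      by have := proper_card p; rewrite ltnNge h.
    by rewrite inE Dx orbT.
  have Sx : S \subset x.
    apply/subsetP => B BS; have := subsetP Sz B BS; rewrite !inE => /orP[/eqP eB|//].
    by move: BS; rewrite eB (negbTE AS).
  by rewrite inE (cs_bigcap cx Sx) orbT.
have xz : lt_ le x z.
  rewrite /lt_ /= subsetUr; apply/eqP => exz; by rewrite exz setU11 in Ax.
have ezy : z = y.
  apply/eqP; apply: contraT => nzy; exfalso; apply: (H z zL); split => //.
  by rewrite /lt_ /= zy nzy.
by rewrite -ezy cardsU1 Ax addnC.
Qed.

Lemma covers_of_card x y : x \in L -> y \in L -> x \subset y -> #|y| = #|x| + 1 ->
  covers L le x y.
Proof.
move=> xL yL xy cxy; split => //.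
  rewrite /lt_ /= xy; apply/eqP => exy; rewrite exy in cxy; lia.
move=> z _ [/andP[/= h1 h2] /andP[/= h3 h4]].
have p1 : x \proper z by rewrite properEneq h2 h1.
have p2 : z \proper y by rewrite properEneq h4 h3.
have := proper_card p1; have := proper_card p2; lia.
Qed.


Lemma jsd : join_semidistributive L (@cs_join G) (@cs_meet G).
Proof.
move=> x y z _ _ _ h; rewrite /cs_join /cs_meet in h *.
apply/eqP; rewrite eqEsubset; apply/andP; split; last first.
  by apply: gen_mono; apply: setUS; exact: subsetIl.
apply/subsetP => A; elim/down_ind: A => A IH hA.
case: (boolP (A \in x)) => Ax.
  by apply: (subsetP (sub_gen _)); rewrite inE Ax.
case: (boolP (A \in y)) => Ay; last first.
  apply: (gen_step hA); rewrite ?inE ?negb_or ?Ax ?Ay //; first exact: gen_closed.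
  by move=> B BF AB; apply: IH => //; exact: (subsetP (sub_gen _)).
case: (boolP (A \in z)) => Az.
  by apply: (subsetP (sub_gen _)); rewrite !inE Ay Az orbT.
rewrite h in hA.
apply: (gen_step hA); rewrite ?inE ?negb_or ?Ax ?Az //; first exact: gen_closed.
by move=> B BF AB; apply: IH => //; rewrite h; exact: (subsetP (sub_gen _)).
Qed.

Lemma lsm : lower_semimodular L le (@cs_join G) (@cs_meet G).
Proof.
move=> x y xL yL cov.
have cJ := cover_card cov.
case: cov => _ JL /andP[/= xJ nxJ] _.
have yJ : y \subset cs_join x y.
  apply: subset_trans (sub_gen _); exact: subsetUr.
have nyx : ~~ (y \subset x).
  apply: contra nxJ => yx; rewrite /cs_join (setUidPl yx).
  move: xL; rewrite inL => /andP[cx _]; by rewrite gen_id.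
have c1 : #|y :\: x| <= #|cs_join x y :\: x|.
  apply: subset_leq_card; exact: setSD.
have c2 : #|cs_join x y :\: x| = 1.
  have := cardsID x (cs_join x y); rewrite (setIidPr xJ) cJ; lia.
have c3 : 0 < #|y :\: x|.
  rewrite card_gt0; apply: contra nyx => /eqP h0; by rewrite -setD_eq0 h0.
apply: covers_of_card => //; first exact: meet_L.
  exact: subsetIr.
have := cardsID x y; rewrite /cs_meet setIC; lia.
Qed.

Lemma rk : ranked L le.
Proof. by exists (fun C => #|C|) => x y /cover_card. Qed.

Definition Mi := [set A in Ext I | ~~ (\bigcap_(B in [set B in Ext I | A \proper B]) B \subset A)].

Lemma jpc : join_pseudocomplemented L le (@cs_join G) (Ext I).
Proof.
move=> x xL; move: (xL); rewrite inL => /andP[cx xE].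
have MiE : Mi \subset Ext I by apply/subsetP => A /setIdP[].
have y0E : gen_cs (Mi :\: x) \subset Ext I.
  by apply: gen_least; [exact: Ext_cs | exact: subset_trans (subsetDl _ _) MiE].
exists (gen_cs (Mi :\: x)); first split.
- by rewrite inL gen_closed y0E.
- apply/eqP; rewrite eqEsubset; apply/andP; split.
    by apply: gen_least; [exact: Ext_cs | rewrite subUset y0E xE].
  apply/subsetP => A; elim/down_ind: A => A IH AE.
  case: (boolP (A \in Mi)) => AM.
    case: (boolP (A \in x)) => Ax.
      by apply: (subsetP (sub_gen _)); rewrite inE Ax orbT.
    apply: (subsetP (sub_gen _)); rewrite inE; apply/orP; left.
    by apply: (subsetP (sub_gen _)); rewrite inE Ax AM.
  have e : A = \bigcap_(B in [set B in Ext I | A \proper B]) B.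
    apply/eqP; rewrite eqEsubset; apply/andP; split.
      by apply/bigcapsP => B; rewrite inE => /andP[_ /proper_sub].
    by move: AM; rewrite inE AE /= negbK.
  rewrite e; apply: cs_bigcap; first exact: gen_closed.
  by apply/subsetP => B; rewrite inE => /andP[BE AB]; apply: IH.
- move=> z zL hz; move: (zL); rewrite inL => /andP[cz zE].
  apply: gen_least => //; apply/subsetP => A /setDP[/setIdP[AE nsub] Ax].
  apply: contraT => Az; case/negP: nsub.
  have hA : A \in gen_cs (z :|: x) by rewrite -/(cs_join z x) hz.
  have := gen_irr hA; rewrite inE negb_or Az Ax => /(_ isT); apply: subset_trans.
  apply/bigcapsP => B; rewrite inE => /andP[Bzx AB]; apply: bigcap_inf.
  rewrite inE AB andbT; move: Bzx; rewrite inE => /orP[]; [exact: (subsetP zE)|exact: (subsetP xE)].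
Qed.

Lemma TExt : [set: G] \in Ext I.
Proof. by rewrite inE eqEsubset subsetT sub_ext. Qed.

Lemma botL : [set [set: G]] \in L.
Proof.
rewrite inL sub1set TExt andbT; apply/csP => S hS.
rewrite inE; apply/eqP/setP => g; rewrite inE; apply/bigcapP => B BS.
by move: (subsetP hS B BS); rewrite inE => /eqP ->.
Qed.

Lemma atm : atomistic L le (@cs_join G) [set [set: G]].
Proof.
move=> x xL; move: (xL); rewrite inL => /andP[cx xE].
have Tx : [set: G] \in x.
  have := cs_bigcap cx (sub0set x); by rewrite big_set0.
exists [set [set [set: G]; A] | A in x :\ [set: G]]; split.
  move=> a /imsetP[A /setD1P[AT Ax] ->].
  apply: covers_of_card => //; first exact: botL.
  - rewrite inL; apply/andP; split.
      apply/csP => S hS; case: (boolP (A \in S)) => AS.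
        have -> : \bigcap_(B in S) B = A.
          apply/eqP; rewrite eqEsubset bigcap_inf //=; apply/bigcapsP => B BS.
          by move: (subsetP hS B BS); rewrite !inE => /orP[] /eqP ->.
        by rewrite !inE eqxx orbT.
      have -> : \bigcap_(B in S) B = [set: G].
        apply/eqP; rewrite eqEsubset subsetT /=; apply/bigcapsP => B BS.
        move: (subsetP hS B BS); rewrite !inE => /orP[] /eqP eB; first by rewrite eB.
        by move: BS; rewrite eB (negbTE AS).
      by rewrite !inE eqxx.
    by apply/subsetP => B; rewrite in_set2 => /orP[] /eqP ->; [exact: TExt | exact: (subsetP xE)].
  - by apply/subsetP => B; rewrite !inE => /eqP ->; rewrite eqxx.
  - by rewrite cards2 cards1 eq_sym AT.
pose K (y1 y2 : {set {set G}}) := y1 = gen_cs ([set [set: G]] :|: y2).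
have : K (\big[@cs_join G/[set [set: G]]]_(a in [set [set [set: G]; A] | A in x :\ [set: G]]) a)
         (\bigcup_(a in [set [set [set: G]; A] | A in x :\ [set: G]]) a).
  apply: big_rec2.
    have := botL; rewrite inL => /andP[hb _]; by rewrite /K setU0 gen_id.
  move=> i y1 y2 _ ->; rewrite /K /cs_join gen_U_gen setUCA //.
rewrite /K => ->.
have -> : [set [set: G]] :|: \bigcup_(a in [set [set [set: G]; A] | A in x :\ [set: G]]) a = x.
  apply/eqP; rewrite eqEsubset; apply/andP; split.
    rewrite subUset sub1set Tx /=; apply/bigcupsP => a /imsetP[A /setD1P[_ Ax] ->].
    by apply/subsetP => B; rewrite !inE => /orP[] /eqP ->.
  apply/subsetP => B Bx; case: (eqVneq B [set: G]) => [->|BT]; first by rewrite !inE eqxx.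
  rewrite inE; apply/orP; right; apply/bigcupP; exists [set [set: G]; B].
    by apply/imsetP; exists B => //; rewrite !inE BT Bx.
  by rewrite !inE eqxx orbT.
by rewrite gen_id.
Qed.

End ExtS.

Theorem proposition7 (G M : finType) (I : {set G * M})
  (hG : 0 < #|G|) (hM : 0 < #|M|) :
  let L := downExt I in
  let le := fun C D : {set {set G}} => C \subset D in
  let top := Ext I in
  let bot := [set [set: G]] in
  join_semidistributive L (@cs_join G) (@cs_meet G) /\
  lower_semimodular L le (@cs_join G) (@cs_meet G) /\
  meet_distributive L le (@cs_join G) (@cs_meet G) /\
  join_pseudocomplemented L le (@cs_join G) top /\
  ranked L le /\
  atomistic L le (@cs_join G) bot.
Proof.
move=> L le top bot.
split; first exact: jsd.
split; first exact: lsm.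
split; first by split; [exact: jsd | exact: lsm].
split; first exact: jpc.
split; first exact: rk.
exact: atm.
Qed.
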